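(* Let $A$ be an $n\times n$ irreducible nonnegative matrix with largest eigenvalue $1$ and a positive vector $w$ with $Aw=w$ and $A^Tw=w$. For $\alpha\in[0,1]$ let $A_\alpha=\alpha A+(1-\alpha)A^T$. Then for every nonempty $U\subsetneq[n]$, every $b\in\mathbb R^{|U|}$, and every $0\le\beta\le\alpha\le\frac12$, \[ \operatorname{cap}_{U,b}(A_\alpha)\le\operatorname{cap}_{U,b}(A_\beta). \]
   Context: For an irreducible nonnegative $n\times n$ matrix $B$ with PF eigenvalue $1$ and a positive vector $w$ with $Bw=w$, $B^Tw=w$, set $L=I-B$. For nonempty $U\subsetneq[n]$ and $b\in\mathbb R^{|U|}$ (indexed by $U$), there is a unique $q\in\mathbb R^n$ with $q_i=w_ib_i$ for $i\in U$ and $(Lq)_i=0$ for $i\notin U$; define the capacity $\operatorname{cap}_{U,b}(B)=\langle q,Lq\rangle$. (Each $A_\alpha$ is irreducible nonnegative with the same $w$ as left and right eigenvector for eigenvalue $1$.) *)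

(* Defs.v *)
From HB Require Import structures.
From mathcomp Require Import all_boot all_order all_algebra.
From mathcomp Require Import complex.
From mathcomp Require Import boolp classical_sets.
From mathcomp Require Import reals.
Set Implicit Arguments. Unset Strict Implicit. Unset Printing Implicit Defensive.
Import Order.TTheory GRing.Theory Num.Theory.
Local Open Scope ring_scope.

Definition mxpow (R : pzRingType) n (A : 'M[R]_n) (k : nat) : 'M[R]_n :=
  iter k (mulmx A) 1%:M.

Definition nonneg_mx (R : numDomainType) n (A : 'M[R]_n) : Prop :=
  forall i j, 0 <= A i j.

(* irreducible nonnegative matrix: its digraph is strongly connected,
   i.e. for all i, j some power of A has a positive (i,j) entry *)
Definition irreducible_mx (R : numDomainType) n (A : 'M[R]_n) : Prop :=
  forall i j, exists k, 0 < mxpow A k i j.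

Definition cx_eigenvalue (R : rcfType) n (A : 'M[R]_n) (l : R[i]) : Prop :=
  exists2 v : 'cV[R[i]]_n, v != 0 & map_mx (fun x => x%:C%C) A *m v = l *: v.

Definition largest_eigenvalue_one (R : rcfType) n (A : 'M[R]_n) : Prop :=
  cx_eigenvalue A 1 /\ forall l, cx_eigenvalue A l -> `|l| <= 1.

Definition mx_alpha (R : pzRingType) n (A : 'M[R]_n) (a : R) : 'M[R]_n :=
  a *: A + (1 - a) *: A^T.

Definition lapl (R : pzRingType) n (B : 'M[R]_n) : 'M[R]_n := 1%:M - B.

Definition cap_sol (R : pzRingType) n (B : 'M[R]_n) (w : 'cV[R]_n)
  (U : {set 'I_n}) (b : 'I_n -> R) (q : 'cV[R]_n) : Prop :=
  (forall i, i \in U -> q i 0 = w i 0 * b i) /\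
  (forall i, i \notin U -> (lapl B *m q) i 0 = 0).

(* cap_{U,b}(B) = <q, L q> for the (unique) q above *)
Definition cap (R : realType) n (B : 'M[R]_n) (w : 'cV[R]_n)
  (U : {set 'I_n}) (b : 'I_n -> R) : R :=
  let q := xget 0 (cap_sol B w U b) in
  \sum_i q i 0 * (lapl B *m q) i 0.

(* Main.v *)
Require Import Defs.
From HB Require Import structures.
From mathcomp Require Import all_boot all_order all_algebra.
From mathcomp Require Import complex boolp classical_sets reals.
From mathcomp Require Import ring lra.
Import Order.TTheory GRing.Theory Num.Theory.
Local Open Scope ring_scope.
Definition bil1 {R : realType} {n} (x y : 'cV[R]_n) : R := \sum_i x i 0 * y i 0.
Definition bA {R : realType} {n} (A : 'M[R]_n) (x y : 'cV[R]_n) : R :=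
  \sum_i \sum_j x i 0 * A i j * y j 0.

Lemma bil_lapl (R : realType) n (A : 'M[R]_n) (a : R) (x y : 'cV[R]_n) :
  \sum_i x i 0 * (lapl (mx_alpha A a) *m y) i 0 = bil1 x y - a * bA A x y - (1 - a) * bA A y x.
Proof.
rewrite /lapl /mx_alpha mulmxBl mul1mx mulmxDl -!scalemxAl.
rewrite /bil1 /bA.
have -> : \sum_j \sum_i y j 0 * A j i * x i 0 = \sum_i \sum_j x i 0 * A^T i j * y j 0.
  rewrite exchange_big /=; apply: eq_bigr => i _; apply: eq_bigr => j _.
  by rewrite mxE; ring.
have E : forall i, x i 0 * (y - (a *: (A *m y) + (1 - a) *: (A^T *m y))) i 0 =
   x i 0 * y i 0 - a * (\sum_j x i 0 * A i j * y j 0)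
   - (1 - a) * (\sum_j x i 0 * A^T i j * y j 0).
  move=> i.
  rewrite !mxE.
  have h : forall M : 'M[R]_n, \sum_j x i 0 * M i j * y j 0 = x i 0 * \sum_j M i j * y j 0.
    by move=> M; rewrite mulr_sumr; apply: eq_bigr => j _; ring.
  rewrite !h; ring.
rewrite (eq_bigr _ (fun i _ => E i)) !sumrB -!mulr_sumr //.
Qed.

Lemma bil1Dl (R : realType) n (x y z : 'cV[R]_n) : bil1 (x + y) z = bil1 x z + bil1 y z.
Proof. rewrite /bil1 -big_split /=; apply: eq_bigr => i _; rewrite mxE; ring. Qed.
Lemma bil1Dr (R : realType) n (x y z : 'cV[R]_n) : bil1 z (x + y) = bil1 z x + bil1 z y.
Proof. rewrite /bil1 -big_split /=; apply: eq_bigr => i _; rewrite mxE; ring. Qed.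
Lemma bil1C (R : realType) n (x y : 'cV[R]_n) : bil1 x y = bil1 y x.
Proof. rewrite /bil1; apply: eq_bigr => i _; ring. Qed.
Lemma bADl (R : realType) n (A : 'M[R]_n) (x y z : 'cV[R]_n) : bA A (x + y) z = bA A x z + bA A y z.
Proof.
rewrite /bA -big_split /=; apply: eq_bigr => i _.
rewrite -big_split /=; apply: eq_bigr => j _; rewrite mxE; ring.
Qed.
Lemma bADr (R : realType) n (A : 'M[R]_n) (x y z : 'cV[R]_n) : bA A z (x + y) = bA A z x + bA A z y.
Proof.
rewrite /bA -big_split /=; apply: eq_bigr => i _.
rewrite -big_split /=; apply: eq_bigr => j _; rewrite mxE; ring.
Qed.
Lemma Q_id (R : realType) n (A : 'M[R]_n) (w : 'cV[R]_n) (x : 'cV[R]_n) :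
  (forall i, 0 < w i 0) -> A *m w = w -> A^T *m w = w ->
  2 * (bil1 x x - bA A x x) =
  \sum_i \sum_j A i j * w i 0 * w j 0 * (x i 0 / w i 0 - x j 0 / w j 0) ^+ 2.
Proof.
move=> Hw HAw HATw.
have wn0 : forall i, w i 0 != 0 by move=> i; rewrite gt_eqF.
have hrow : forall i, \sum_j A i j * w j 0 = w i 0.
  by move=> i; rewrite -[in RHS]HAw mxE.
have hcol : forall j, \sum_i A i j * w i 0 = w j 0.
  move=> j; rewrite -[in RHS]HATw mxE; apply: eq_bigr => i _; by rewrite mxE.
have E : forall i j, A i j * w i 0 * w j 0 * (x i 0 / w i 0 - x j 0 / w j 0) ^+ 2 =
   (x i 0 ^+ 2 / w i 0) * (A i j * w j 0) + (x j 0 ^+ 2 / w j 0) * (A i j * w i 0)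
   - 2 * (x i 0 * A i j * x j 0).
  move=> i j; have := wn0 i; have := wn0 j; move=> h1 h2; field; by rewrite h1 h2.
under eq_bigr => i _ do under eq_bigr => j _ do rewrite E.
have S1 : \sum_i \sum_j (x i 0 ^+ 2 / w i 0) * (A i j * w j 0) = bil1 x x.
  rewrite /bil1; apply: eq_bigr => i _; rewrite -mulr_sumr hrow.
  by field; rewrite wn0.
have S2 : \sum_i \sum_j (x j 0 ^+ 2 / w j 0) * (A i j * w i 0) = bil1 x x.
  rewrite exchange_big /bil1; apply: eq_bigr => j _ /=; rewrite -mulr_sumr hcol.
  by field; rewrite wn0.
have S3 : \sum_i \sum_j 2 * (x i 0 * A i j * x j 0) = 2 * bA A x x.
  by rewrite /bA mulr_sumr; apply: eq_bigr => i _; rewrite mulr_sumr.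
have -> : 2 * (bil1 x x - bA A x x) = bil1 x x + bil1 x x - 2 * bA A x x by ring.
rewrite -S3 -{1}S1 -S2 -big_split /= -sumrB; apply: eq_bigr => i _.
by rewrite -big_split /= -sumrB.
Qed.

Lemma Q_ge0 (R : realType) n (A : 'M[R]_n) (w : 'cV[R]_n) (x : 'cV[R]_n) :
  nonneg_mx A -> (forall i, 0 < w i 0) -> A *m w = w -> A^T *m w = w ->
  0 <= bil1 x x - bA A x x.
Proof.
move=> HA Hw HAw HATw.
have : 0 <= 2 * (bil1 x x - bA A x x).
  rewrite (@Q_id _ _ A w x Hw HAw HATw); apply: sumr_ge0 => i _; apply: sumr_ge0 => j _.
  apply: mulr_ge0; last exact: sqr_ge0.
  by apply: mulr_ge0; [apply: mulr_ge0|]; [exact: HA| exact: ltW (Hw i)| exact: ltW (Hw j)].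
by rewrite pmulr_rge0.
Qed.

Lemma pos_sum_ex (R : realType) n (f : 'I_n -> R) : 0 < \sum_i f i -> exists i, 0 < f i.
Proof.
move=> H; case: (pickP (fun i => 0 < f i)) => [i Hi|H0]; first by exists i.
exfalso; have : \sum_i f i <= 0.
  by apply: sumr_le0 => i _; rewrite leNgt H0.
by rewrite leNgt H.
Qed.

Lemma path_eq (R : realType) n (A : 'M[R]_n) (u : 'I_n -> R) :
  nonneg_mx A -> (forall i j, 0 < A i j -> u i = u j) ->
  forall k i j, 0 < mxpow A k i j -> u i = u j.
Proof.
move=> HA Hu; elim=> [|k IH] i j.
  rewrite /mxpow /= mxE; case: eqP => [->//|]; by rewrite ltxx.
rewrite /mxpow iterS -/(mxpow A k) mxE => /(@pos_sum_ex _ _ _) [l Hl].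
have Hil : 0 < A i l.
  rewrite lt0r HA andbT; apply/negP => /eqP H0; move: Hl; by rewrite H0 mul0r ltxx.
rewrite (Hu _ _ Hil); apply: IH; by rewrite -(pmulr_rgt0 _ Hil).
Qed.

Lemma Q_eq0 (R : realType) n (A : 'M[R]_n) (w : 'cV[R]_n) (U : {set 'I_n}) (x : 'cV[R]_n) :
  nonneg_mx A -> irreducible_mx A -> (forall i, 0 < w i 0) -> A *m w = w -> A^T *m w = w ->
  U != finset.set0 -> (forall i, i \in U -> x i 0 = 0) ->
  bil1 x x - bA A x x = 0 -> x = 0.
Proof.
move=> HA Hirr Hw HAw HATw /set0Pn [i0 Hi0] HxU HQ.
have wn0 : forall i, w i 0 != 0 by move=> i; rewrite gt_eqF.
have H2 := @Q_id _ _ A w x Hw HAw HATw; rewrite HQ mulr0 in H2.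
have Hge : forall i j, 0 <= A i j * w i 0 * w j 0 * (x i 0 / w i 0 - x j 0 / w j 0) ^+ 2.
  move=> i j; apply: mulr_ge0; last exact: sqr_ge0.
  by apply: mulr_ge0; [apply: mulr_ge0|]; [exact: HA| exact: ltW (Hw i)| exact: ltW (Hw j)].
have Hi : forall i, \sum_j A i j * w i 0 * w j 0 * (x i 0 / w i 0 - x j 0 / w j 0) ^+ 2 = 0.
  move=> i; apply: (psumr_eq0P _ (esym H2)) => //= k _; apply: sumr_ge0 => l _; exact: Hge.
set u := fun i => x i 0 / w i 0.
have Hu : forall i j, 0 < A i j -> u i = u j.
  move=> i j Hij.
  have := psumr_eq0P (fun l _ => Hge i l) (Hi i) (i:=j) isT.
  move/eqP; rewrite !mulf_eq0 subr_eq0 (gt_eqF Hij) (negbTE (wn0 i)) (negbTE (wn0 j)) orbb /=.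
  by rewrite orbb => /eqP.
have Hk := @path_eq _ _ A u HA Hu.
have u0 : u i0 = 0 by rewrite /u HxU // mul0r.
apply/matrixP => j k; rewrite (ord1 k) mxE.
have [m Hm] := Hirr j i0.
have := Hk _ _ _ Hm; rewrite u0 /u => /eqP; rewrite mulf_eq0 invr_eq0 (negbTE (wn0 j)) orbF.
by move/eqP.
Qed.

Lemma van (R : realType) n (M : 'M[R]_n) (U : {set 'I_n}) (d q : 'cV[R]_n) :
  (forall i, i \in U -> d i 0 = 0) -> (forall i, i \notin U -> (M *m q) i 0 = 0) ->
  \sum_i d i 0 * (M *m q) i 0 = 0.
Proof.
move=> Hd Hq; apply: big1 => i _; case: (boolP (i \in U)) => Hi.
  by rewrite Hd // mul0r.
by rewrite Hq // mulr0.
Qed.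

Lemma exists_sol (R : realType) n (A : 'M[R]_n) (w : 'cV[R]_n) (U : {set 'I_n}) (b : 'I_n -> R) (a : R) :
  nonneg_mx A -> irreducible_mx A -> (forall i, 0 < w i 0) -> A *m w = w -> A^T *m w = w ->
  U != finset.set0 -> exists q, cap_sol (mx_alpha A a) w U b q.
Proof.
move=> HA Hirr Hw HAw HATw HU.
set L := lapl (mx_alpha A a).
pose N : 'M[R]_n := \matrix_(i, j) if i \in U then (i == j)%:R else (if j \in U then 0 else L i j).
have NU : forall (x : 'cV[R]_n) i, i \in U -> (N *m x) i 0 = x i 0.
  move=> x i Hi; rewrite mxE (bigD1 i) //= !mxE Hi eqxx mul1r big1 ?addr0 // => j Hj.
  by rewrite mxE Hi eq_sym (negbTE Hj) mul0r.
have NV : forall (x : 'cV[R]_n) i, i \notin U -> (forall j, j \in U -> x j 0 = 0) ->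
    (N *m x) i 0 = (L *m x) i 0.
  move=> x i Hi Hx; rewrite !mxE; apply: eq_bigr => j _; rewrite mxE (negbTE Hi).
  by case: (boolP (j \in U)) => Hj //; rewrite Hx // !mulr0.
have Nunit : N \in unitmx.
  rewrite unitmxE unitfE -det_tr; apply/negP => /det0P [v vn0 Hv].
  pose x := v^T.
  have Hx : N *m x = 0 by rewrite /x -(trmxK N) -trmx_mul Hv trmx0.
  have xU : forall i, i \in U -> x i 0 = 0 by move=> i Hi; rewrite -NU // Hx mxE.
  have HLx : forall i, i \notin U -> (L *m x) i 0 = 0 by move=> i Hi; rewrite -NV // Hx mxE.
  have := @van _ _ L U x x xU HLx; rewrite /L bil_lapl.
  have -> : bil1 x x - a * bA A x x - (1 - a) * bA A x x = bil1 x x - bA A x x by ring.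
  move/(@Q_eq0 _ _ A w U x HA Hirr Hw HAw HATw HU xU) => x0.
  by move: vn0; rewrite -(trmxK v) -/x x0 trmx0 eqxx.
pose c : 'cV[R]_n := \col_i (if i \in U then w i 0 * b i else 0).
pose r : 'cV[R]_n := \col_i (if i \in U then 0 else - (L *m c) i 0).
pose x := invmx N *m r.
have Hx : N *m x = r by rewrite /x mulmxA mulmxV // mul1mx.
have xU : forall i, i \in U -> x i 0 = 0.
  by move=> i Hi; rewrite -NU // Hx mxE Hi.
exists (c + x); split.
  by move=> i Hi; rewrite mxE xU // addr0 mxE Hi.
move=> i Hi; rewrite mulmxDr mxE -(NV x i Hi xU) Hx !mxE (negbTE Hi) -/L.
by rewrite subrr.
Qed.

Theorem theorem1p5 (R : realType) (n : nat) (A : 'M[R]_n) (w : 'cV[R]_n) :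
  nonneg_mx A -> irreducible_mx A -> largest_eigenvalue_one A ->
  (forall i, 0 < w i 0) -> A *m w = w -> A^T *m w = w ->
  forall (U : {set 'I_n}) (b : 'I_n -> R) (alpha beta : R),
    U != finset.set0 -> U != [set: 'I_n]%SET ->
    0 <= beta -> beta <= alpha -> alpha <= 1 / 2 ->
    cap (mx_alpha A alpha) w U b <= cap (mx_alpha A beta) w U b.
Proof.
move=> HA Hirr _ Hw HAw HATw U b alpha beta HU _ Hb0 Hba Ha.
have [->|Hne] := eqVneq alpha beta; first exact: lexx.
have Hlt : beta < alpha by rewrite lt_neqAle eq_sym Hne Hba.
have H1 := xgetPex 0 (@exists_sol R n A w U b alpha HA Hirr Hw HAw HATw HU).
have H2 := xgetPex 0 (@exists_sol R n A w U b beta HA Hirr Hw HAw HATw HU).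
rewrite /cap /=.
move: H1 H2.
set q1 := xget 0 (cap_sol (mx_alpha A alpha) w U b).
set q2 := xget 0 (cap_sol (mx_alpha A beta) w U b).
move=> [H1U H1V] [H2U H2V].
pose d := q2 - q1.
have Hq2 : q2 = q1 + d by rewrite /d addrC subrK.
have dU : forall i, i \in U -> d i 0 = 0.
  by move=> i Hi; rewrite /d !mxE H1U // H2U // subrr.
have E1 := @van _ _ _ U d q1 dU H1V.
have E2 := @van _ _ _ U d q2 dU H2V.
rewrite bil_lapl in E1; rewrite bil_lapl in E2.
rewrite !bil_lapl.
have Qd := @Q_ge0 _ _ A w d HA Hw HAw HATw.
clearbody d. rewrite Hq2 in E2 *.
rewrite !bil1Dl !bil1Dr !bADl !bADr in E2 *.
rewrite (@bil1C _ _ d q1) in E1 E2 *.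
have Hp : (alpha - beta) * (bA A q1 d - bA A d q1) = bil1 d d - bA A d d.
  apply/eqP; rewrite -subr_eq0; apply/eqP; rewrite -[RHS](subrr 0) -{1}E1 -E2; ring.
have Hp0 : 0 <= bA A q1 d - bA A d q1.
  have hab : 0 < alpha - beta by rewrite subr_gt0.
  by rewrite -(pmulr_rge0 _ hab) Hp.
have Hm : 0 <= (1 - 2 * alpha) * (bA A q1 d - bA A d q1).
  by apply: mulr_ge0 => //; lra.
nra.
Qed.
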